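(* Let $q_1$ be piecewise continuous on $I=[a,b]$ and let $u$ be a solution of $u''+q_1(t)u=0$ with $u(a)=u(b)=0$, $a,b$ consecutive zeros of $u$. Then for every $\eta\in(0,b-a)$ there exist a piecewise continuous function $q_2$ on $I$ and a subinterval $J\subset I$ of length at most $\eta$ such that the inequality $q_1(t)\le q_2(t)$ is satisfied only for $t\in J$, and Sturm's comparison theorem holds on $I$, i.e. every solution $v$ of $v''+q_2(t)v=0$ has at least one zero in $I$.
   Context: ''Solution'' always means a nontrivial (not identically zero) solution. *)

(* Defs.v *)
From Stdlib Require Import Reals List.
From Coquelicot Require Import Coquelicot.
Open Scope R_scope.

Definition in_I (a b t : R) : Prop := a <= t <= b.

Definition piecewise_continuous (f : R -> R) (a b : R) : Prop :=
  exists (n : nat) (x : nat -> R),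
    x 0%nat = a /\ x n = b /\
    (forall i, (i < n)%nat -> x i < x (S i)) /\
    (forall i, (i < n)%nat ->
       (forall t, x i < t < x (S i) -> continuous f t) /\
       (exists l, filterlim f (at_right (x i)) (locally l)) /\
       (exists l, filterlim f (at_left (x (S i))) (locally l))).

Definition cont_on_I (v : R -> R) (a b t : R) : Prop :=
  filterlim v (within (in_I a b) (locally t)) (locally (v t)).

(* v is a (Caratheodory/classical) solution of v'' + q v = 0 on [a,b]:
   v is C^1 on [a,b] (differentiable on (a,b), with v and v' continuous
   on [a,b]) and v'' = - q v holds at every point of (a,b) except
   finitely many (the break points of the piecewise continuous q). *)
Definition is_solution_on (q : R -> R) (a b : R) (v : R -> R) : Prop :=
  exists v' : R -> R,
    (forall t, a < t < b -> is_derive v t (v' t)) /\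
    (forall t, in_I a b t -> cont_on_I v a b t /\ cont_on_I v' a b t) /\
    (exists E : list R, forall t, a < t < b -> ~ In t E ->
        is_derive v' t (- q t * v t)).

Definition nontrivial_on (a b : R) (v : R -> R) : Prop :=
  exists t, in_I a b t /\ v t <> 0.

Definition solution (q : R -> R) (a b : R) (v : R -> R) : Prop :=
  is_solution_on q a b v /\ nontrivial_on a b v.

(* Main.v *)
Require Import Defs.
From Stdlib Require Import Reals List.
From Coquelicot Require Import Coquelicot.
From Stdlib Require Import Lra Lia Ranalysis5.
Open Scope R_scope.


Lemma loc_int a b t : a < t < b -> locally t (fun x => a < x < b).
Proof. intros H. apply (locally_interval _ t (Finite a) (Finite b)); simpl; try lra. auto. Qed.

Lemma piece_bound f l r x y : x < y -> (forall t, x < t < y -> continuous f t) ->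
  filterlim f (at_right x) (locally l) -> filterlim f (at_left y) (locally r) ->
  exists m, forall t, x <= t <= y -> m <= f t.
Proof.
  intros Hxy Hc Hl Hr.
  assert (L1 : locally l (fun z => l - 1 < z)).
  { apply (locally_interval _ l (Finite (l-1)) p_infty); simpl; auto; lra. }
  assert (L2 : locally r (fun z => r - 1 < z)).
  { apply (locally_interval _ r (Finite (r-1)) p_infty); simpl; auto; lra. }
  specialize (Hl _ L1). specialize (Hr _ L2).
  destruct Hl as [e1 He1]. destruct Hr as [e2 He2].
  set (d := Rmin (Rmin e1 e2) (y - x) / 2).
  assert (Hd0 : 0 < d).
  { unfold d. assert (0 < Rmin (Rmin e1 e2) (y-x)). { repeat apply Rmin_pos; try apply cond_pos; lra. } lra. }
  assert (Hd1 : d < e1). { unfold d. pose proof (Rmin_l (Rmin e1 e2) (y-x)). pose proof (Rmin_l e1 e2). pose proof (cond_pos e1). lra. }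
  assert (Hd2 : d < e2). { unfold d. pose proof (Rmin_l (Rmin e1 e2) (y-x)). pose proof (Rmin_r e1 e2). pose proof (cond_pos e2). lra. }
  assert (Hd3 : 2 * d <= y - x). { unfold d. pose proof (Rmin_r (Rmin e1 e2) (y-x)). lra. }
  destruct (continuity_ab_min f (x + d) (y - d)) as [mx [Hmx Hmx2]]; [lra| |].
  { intros c Hc'. apply continuity_pt_filterlim. apply Hc. lra. }
  exists (Rmin (Rmin (l - 1) (r - 1)) (Rmin (f mx) (Rmin (f x) (f y)))).
  intros t Ht.
  pose proof (Rmin_l (Rmin (l - 1) (r - 1)) (Rmin (f mx) (Rmin (f x) (f y)))).
  pose proof (Rmin_r (Rmin (l - 1) (r - 1)) (Rmin (f mx) (Rmin (f x) (f y)))).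
  pose proof (Rmin_l (l-1) (r-1)). pose proof (Rmin_r (l-1) (r-1)).
  pose proof (Rmin_l (f mx) (Rmin (f x) (f y))). pose proof (Rmin_r (f mx) (Rmin (f x) (f y))).
  pose proof (Rmin_l (f x) (f y)). pose proof (Rmin_r (f x) (f y)).
  destruct (Req_dec t x) as [->|Htx]; [lra|].
  destruct (Req_dec t y) as [->|Hty]; [lra|].
  destruct (Rle_dec t (x + d)).
  { assert (l - 1 < f t). { apply (He1 t). change (Rabs (t - x) < e1). apply Rabs_def1; lra. lra. } lra. }
  destruct (Rle_dec (y - d) t).
  { assert (r - 1 < f t). { apply (He2 t). change (Rabs (t - y) < e2). apply Rabs_def1; lra. lra. } lra. }
  assert (f mx <= f t) by (apply Hmx; lra). lra.
Qed.

Lemma fin_min (f : R -> R) (x : nat -> R) n :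
  (forall i, (i < n)%nat -> exists m, forall t, x i <= t <= x (S i) -> m <= f t) ->
  exists m, forall i, (i < n)%nat -> forall t, x i <= t <= x (S i) -> m <= f t.
Proof.
  induction n as [|n IH]; intros H.
  - exists 0. intros; lia.
  - destruct IH as [m Hm]. { intros i Hi. apply H. lia. }
    destruct (H n ltac:(lia)) as [m2 Hm2].
    exists (Rmin m m2). intros i Hi t Ht.
    pose proof (Rmin_l m m2); pose proof (Rmin_r m m2).
    destruct (Nat.eq_dec i n) as [->|Hne].
    + specialize (Hm2 t Ht). lra.
    + specialize (Hm i ltac:(lia) t Ht). lra.
Qed.

Lemma cover (x : nat -> R) n : forall t, x 0%nat <= t <= x n ->
  t = x 0%nat \/ exists i, (i < n)%nat /\ x i <= t <= x (S i).
Proof.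
  induction n as [|n IH]; intros t Ht.
  - left; lra.
  - destruct (Rle_dec t (x n)).
    + destruct (IH t ltac:(lra)) as [H|[i [Hi H]]]; auto. right; exists i; split; [lia|auto].
    + right. exists n. split; [lia|lra].
Qed.

Lemma const_except (W : R -> R) (E : list R) : forall x y, x <= y ->
  (forall t, x <= t <= y -> continuous W t) ->
  (forall t, x < t < y -> ~ In t E -> is_derive W t 0) -> W y = W x.
Proof.
  induction E as [|e E IH]; intros x y Hxy Hc Hd.
  - destruct (MVT_gen W x y (fun _ => 0)) as [z [_ Hz]].
    + intros t Ht. rewrite Rmin_left in Ht by lra. rewrite Rmax_right in Ht by lra. apply Hd; auto.
    + intros t Ht. rewrite Rmin_left in Ht by lra. rewrite Rmax_right in Ht by lra.
      apply continuity_pt_filterlim. apply Hc; auto.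
    + lra.
  - destruct (Rlt_dec x e); [destruct (Rlt_dec e y)|].
    + transitivity (W e).
      * apply IH; try lra. intros; apply Hc; lra. intros t Ht Hn. apply Hd. lra. intros [H|H]; [lra|tauto].
      * apply IH; try lra. intros; apply Hc; lra. intros t Ht Hn. apply Hd. lra. intros [H|H]; [lra|tauto].
    + apply IH; auto. intros t Ht Hn. apply Hd. lra. intros [H|H]; [lra|tauto].
    + apply IH; auto. intros t Ht Hn. apply Hd. lra. intros [H|H]; [lra|tauto].
Qed.

Lemma W_deriv (v v' : R -> R) w c t K : K = w * w -> is_derive v t (v' t) -> is_derive v' t (- K * v t) ->
  is_derive (fun s => v' s * sin (w * (s - c)) - v s * (w * cos (w * (s - c)))) t 0.
Proof.
  intros HK H1 H2.
  assert (Hs : is_derive (fun s => sin (w * (s - c))) t (w * cos (w * (t - c)))).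
  { auto_derive; auto. unfold Rminus; ring. }
  assert (Hco : is_derive (fun s => w * cos (w * (s - c))) t (-(w*w) * sin (w * (t - c)))).
  { auto_derive; auto. unfold Rminus; ring. }
  pose proof (is_derive_minus _ _ _ _ _ (is_derive_mult _ _ _ _ _ H2 Hs Rmult_comm) (is_derive_mult _ _ _ _ _ H1 Hco Rmult_comm)) as H.
  match type of H with is_derive _ _ ?l => replace 0 with l; [exact H|] end.
  unfold minus, plus, mult, opp; simpl. subst K. ring.
Qed.
Lemma W_cont (v v' : R -> R) w c t : continuous v t -> continuous v' t ->
  continuous (fun s => v' s * sin (w * (s - c)) - v s * (w * cos (w * (s - c)))) t.
Proof.
  intros H1 H2.
  assert (Hs : continuous (fun s => sin (w * (s - c))) t).
  { apply (@ex_derive_continuous R_AbsRing R_NormedModule). auto_derive. auto. }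
  assert (Hco : continuous (fun s => w * cos (w * (s - c))) t).
  { apply (@ex_derive_continuous R_AbsRing R_NormedModule). auto_derive. auto. }
  apply (continuous_minus (fun s => v' s * sin (w * (s - c))) (fun s => v s * (w * cos (w * (s - c))))).
  apply (continuous_mult v' (fun s => sin (w * (s - c)))); auto.
  apply (continuous_mult v (fun s => w * cos (w * (s - c)))); auto.
Qed.

Lemma lc f x y k : x < y -> (forall s, x < s < y -> f s = k) ->
  filterlim f (at_right x) (locally k) /\ filterlim f (at_left y) (locally k) /\
  (forall t, x < t < y -> @continuous R_UniformSpace R_UniformSpace f t).
Proof.
  intros Hxy Hf. split; [|split].
  - apply (filterlim_ext_loc (fun _ => k)); [|apply filterlim_const].
    unfold at_right, within.
    apply (filter_imp (fun s => s < y)); [intros s Hs Hs'; symmetry; apply Hf; lra|].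
    apply (locally_interval _ x m_infty (Finite y)); simpl; auto.
  - apply (filterlim_ext_loc (fun _ => k)); [|apply filterlim_const].
    unfold at_left, within.
    apply (filter_imp (fun s => x < s)); [intros s Hs Hs'; symmetry; apply Hf; lra|].
    apply (locally_interval _ y (Finite x) p_infty); simpl; auto.
  - intros t Ht. unfold continuous. rewrite (Hf t Ht).
    apply (filterlim_ext_loc (fun _ => k)); [|apply filterlim_const].
    apply (filter_imp (fun s => x < s < y)); [intros s Hs; symmetry; apply Hf; lra|].
    apply (locally_interval _ t (Finite x) (Finite y)); simpl; try lra. auto.
Qed.

Lemma pc_lower f a b : piecewise_continuous f a b -> exists m, forall t, a <= t <= b -> m <= f t.
Proof.
  intros [n [x [H0 [Hn [Hinc Hp]]]]].
  destruct (fin_min f x n) as [m Hm].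
  { intros i Hi. destruct (Hp i Hi) as [Hc [[l Hl] [r Hr]]].
    apply (piece_bound f l r); auto. }
  exists (Rmin m (f a)). intros t Ht.
  pose proof (Rmin_l m (f a)); pose proof (Rmin_r m (f a)).
  rewrite <- H0, <- Hn in Ht.
  destruct (cover x n t Ht) as [->|[i [Hi Hti]]].
  - rewrite H0; lra.
  - specialize (Hm i Hi t Hti). lra.
Qed.

Lemma cont_inner g a b t : a < t < b -> cont_on_I g a b t -> continuous g t.
Proof.
  intros Ht H. unfold cont_on_I in H. intros P HP. specialize (H P HP).
  unfold filtermap, within in *.
  apply (filter_imp (fun x => (in_I a b x -> P (g x)) /\ a < x < b)).
  { intros x [H1 H2]. apply H1. unfold in_I; lra. }
  apply filter_and; auto. apply loc_int; auto.
Qed.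

Theorem theorem5 (a b : R) (q1 u : R -> R) :
  a < b ->
  piecewise_continuous q1 a b ->
  solution q1 a b u ->
  u a = 0 -> u b = 0 ->
  (forall t, a < t < b -> u t <> 0) ->
  forall eta : R, 0 < eta < b - a ->
  exists q2 : R -> R,
    piecewise_continuous q2 a b /\
    (exists c d : R,
       a <= c /\ c <= d /\ d <= b /\ d - c <= eta /\
       (forall t, in_I a b t -> q1 t <= q2 t -> c <= t <= d)) /\
    (forall v : R -> R, solution q2 a b v ->
       exists t, in_I a b t /\ v t = 0).
Proof.
  intros Hab Hpc _ _ _ _ eta Heta.
  destruct (pc_lower _ _ _ Hpc) as [m Hm].
  pose (c := a + (b - a - eta) / 2). pose (d := c + eta).
  pose (w := PI / eta). pose (K := w * w).
  assert (Hc1 : a < c) by (unfold c; lra).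
  assert (Hc2 : c < d) by (unfold d; lra).
  assert (Hc3 : d < b) by (unfold d, c; lra).
  pose (q2 := fun t => if Rle_dec c t then if Rle_dec t d then K else m - 1 else m - 1).
  assert (Hq2in : forall t, c <= t <= d -> q2 t = K).
  { intros t Ht. unfold q2. destruct (Rle_dec c t); [|lra]. destruct (Rle_dec t d); lra. }
  assert (Hq2out : forall t, ~ (c <= t <= d) -> q2 t = m - 1).
  { intros t Ht. unfold q2. destruct (Rle_dec c t); auto. destruct (Rle_dec t d); auto. lra. }
  exists q2. split; [|split].
  - exists 3%nat, (fun i => match i with 0 => a | 1 => c | 2 => d | _ => b end).
    split; [reflexivity|split;[reflexivity|split]].
    + intros i Hi. destruct i as [|[|[|i]]]; simpl; try lra; lia.
    + intros i Hi. destruct i as [|[|[|i]]]; [..|lia]; simpl.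
      * destruct (lc q2 a c (m-1)) as [H1 [H2 H3]]; [lra| |].
        { intros s Hs. apply Hq2out. lra. }
        split; [exact H3|split; eexists; eauto].
      * destruct (lc q2 c d K) as [H1 [H2 H3]]; [lra| |].
        { intros s Hs. apply Hq2in. lra. }
        split; [exact H3|split; eexists; eauto].
      * destruct (lc q2 d b (m-1)) as [H1 [H2 H3]]; [lra| |].
        { intros s Hs. apply Hq2out. lra. }
        split; [exact H3|split; eexists; eauto].
  - exists c, d. split; [lra|split;[lra|split;[lra|split;[unfold d; lra|]]]].
    intros t Ht Hq. destruct (Rle_dec c t); destruct (Rle_dec t d); try lra;
    (rewrite Hq2out in Hq by lra; specialize (Hm t Ht); lra).
  - intros v [[v' [Hd [Hc [E HE]]]] _].
    assert (Hw : 0 < w) by (unfold w; apply Rdiv_lt_0_compat; [apply PI_RGT_0|lra]).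
    assert (Cv : forall t, a < t < b -> continuous v t).
    { intros t Ht. apply (@ex_derive_continuous R_AbsRing R_NormedModule). exists (v' t). apply Hd; auto. }
    assert (Cv' : forall t, a < t < b -> continuous v' t).
    { intros t Ht. apply (cont_inner v' a b); auto. apply Hc. unfold in_I; lra. }
    pose (W := fun s => v' s * sin (w * (s - c)) - v s * (w * cos (w * (s - c)))).
    assert (HW : W d = W c).
    { apply (const_except W E c d); [lra| |].
      - intros t Ht. apply W_cont; [apply Cv|apply Cv']; lra.
      - intros t Ht Hn. apply (W_deriv v v' w c t K); [reflexivity|apply Hd; lra|].
        rewrite <- (Hq2in t) by lra. apply HE; auto; lra. }
    unfold W in HW.
    replace (w * (c - c)) with 0 in HW by ring.
    replace (w * (d - c)) with PI in HW by (unfold w, d; field; lra).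
    rewrite sin_0, cos_0, sin_PI, cos_PI in HW.
    assert (Hvd : v d = - v c) by nra.
    assert (Cp : forall s, c <= s <= d -> continuity_pt v s).
    { intros s Hs. apply continuity_pt_filterlim. apply Cv. lra. }
    destruct (Req_dec (v c) 0) as [H0|H0].
    + exists c. split; auto. unfold in_I; lra.
    + destruct (Rlt_dec (v c) 0).
      * destruct (IVT_interv v c d Cp Hc2 r) as [z [Hz1 Hz2]]; [lra|].
        exists z. split; auto. unfold in_I; lra.
      * destruct (IVT_interv (fun s => - v s) c d) as [z [Hz1 Hz2]]; [|lra|lra|lra|].
        { intros s Hs. apply continuity_pt_filterlim.
          apply (continuous_opp v). apply Cv. lra. }
        exists z. split; [unfold in_I; lra|lra].
Qed.
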